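(* Let $C:\mathbb{R}^n\to\mathbb{R}$ be convex, increasing and $\mathbf 1$-invariant. Then $\varphi:\mathbb{R}^n\to\mathbb{R}$, $\varphi(\vec q)=-C(-\vec q)$, is concave and increasing. Furthermore $\mathsf{ValTrades}_\varphi=\mathsf{ValTrades}'_C$, i.e. for every nonempty history $h$, \[\{\vec r\in\mathbb{R}^n\mid\varphi(\vec q_h+\vec r)=\varphi(\vec q_h)\}=\{\vec r+\alpha\mathbf 1\mid \vec r\in\mathbb{R}^n,\ \alpha=C(-\vec q_h-\vec r)-C(-\vec q_h)\}.\]
   Context: $\mathbf 1=(1,\dots,1)\in\mathbb{R}^n$. $C$ is $\mathbf 1$-invariant if $C(\vec q+\alpha\mathbf 1)=C(\vec q)+\alpha$ for all $\vec q,\alpha$; a function is increasing if $f(\vec q)>f(\vec q')$ whenever $\vec q\succeq\vec q'$ coordinatewise and $\vec q\neq\vec q'$. A history $h$ is a finite list of vectors in $\mathbb{R}^n$ and $\vec q_h$ is their sum. $\mathsf{ValTrades}_\varphi(h)=\{\vec r\mid\varphi(\vec q_h+\vec r)=\varphi(\vec q_h)\}$ is the constant-function market maker (CFMM) for potential $\varphi$, and $\mathsf{ValTrades}'_C(h)=\{\vec r+\alpha\mathbf 1\mid\vec r\in\mathbb{R}^n,\ \alpha=C(-\vec q_h-\vec r)-C(-\vec q_h)\}$ is the cashless cost-function market maker for $C$. *)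

(* Defs.v *)
From HB Require Import structures.
From mathcomp Require Import all_boot all_order all_algebra.
From mathcomp Require Import classical_sets reals.
Set Implicit Arguments. Unset Strict Implicit. Unset Printing Implicit Defensive.
Import Order.TTheory GRing.Theory Num.Theory.
Local Open Scope ring_scope.
Local Open Scope classical_set_scope.

Section Defs.
Variables (R : realType) (n : nat).
Notation vec := 'rV[R]_n.

Definition ones : vec := const_mx 1.

Definition vge (q q' : vec) : Prop := forall i, q' ord0 i <= q ord0 i.

Definition convex_fun (f : vec -> R) : Prop :=
  forall (x y : vec) (t : R), 0 <= t -> t <= 1 ->
    f (t *: x + (1 - t) *: y) <= t * f x + (1 - t) * f y.

Definition concave_fun (f : vec -> R) : Prop :=
  forall (x y : vec) (t : R), 0 <= t -> t <= 1 ->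
    t * f x + (1 - t) * f y <= f (t *: x + (1 - t) *: y).

Definition increasing_fun (f : vec -> R) : Prop :=
  forall q q' : vec, vge q q' -> q <> q' -> f q' < f q.

Definition one_invariant (C : vec -> R) : Prop :=
  forall (q : vec) (a : R), C (q + a *: ones) = C q + a.

Definition qh (h : seq vec) : vec := \sum_(v <- h) v.

Definition ValTrades (phi : vec -> R) (h : seq vec) : set vec :=
  [set r | phi (qh h + r) = phi (qh h)].

Definition ValTrades' (C : vec -> R) (h : seq vec) : set vec :=
  [set s | exists (r : vec) (a : R),
      a = C (- qh h - r) - C (- qh h) /\ s = r + a *: ones].

End Defs.

(* Main.v *)
Require Import Defs.
From HB Require Import structures.
From mathcomp Require Import all_boot all_order all_algebra.
From mathcomp Require Import classical_sets reals.
From mathcomp Require Import lra.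
Import Order.TTheory GRing.Theory Num.Theory.
Local Open Scope ring_scope.
Local Open Scope classical_set_scope.

Theorem theorem3p3 (R : realType) (n : nat) (C : 'rV[R]_n -> R) :
  convex_fun C -> increasing_fun C -> one_invariant C ->
  let phi := fun q : 'rV[R]_n => - C (- q) in
  [/\ concave_fun phi, increasing_fun phi &
      forall h : seq 'rV[R]_n, h <> [::] -> ValTrades phi h = ValTrades' C h].
Proof.
move=> Hcv Hinc Hinv phi; split.
- move=> x y t t0 t1; rewrite /phi.
  have -> : - (t *: x + (1 - t) *: y) = t *: (- x) + (1 - t) *: (- y).
    by rewrite opprD -!scalerN.
  have := Hcv (- x) (- y) t t0 t1.
  rewrite !mulrN; lra.
- move=> q q' Hge Hne; rewrite /phi ltrN2; apply: (Hinc (- q') (- q)).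
  + rewrite /vge => i; rewrite !mxE lerN2; exact: Hge.
  + by move/oppr_inj => /esym.
- move=> h _; rewrite /ValTrades /ValTrades'.
  apply/seteqP; split => s /=.
  + move=> E; exists s, 0; split; last by rewrite scale0r addr0.
    rewrite /phi in E. move/oppr_inj: E; rewrite opprD => ->; by rewrite subrr.
  + move=> [r [a [Ha ->]]]; rewrite /phi; congr (- _).
    have -> : - (qh h + (r + a *: ones R n)) = (- qh h - r) + (- a) *: ones R n.
      by rewrite scaleNr !opprD addrA.
    rewrite Hinv Ha; lra.
Qed.
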